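(* Let $Y^1,\dots,Y^{n+3}\in\mathbb{R}^n$ with components $Y^\alpha=(Y^\alpha_i)_{i=1}^n$. Then $$\sum_{\alpha,\beta'=1}^{n+3}(Y^\alpha)^T\mathbb X^{\alpha\beta'}Y^{\beta'}=\varepsilon\nu\big|Y^{n+1}+(n+2)\Theta Y^{n+3}\big|^2+4\varepsilon\kappa\Theta^2|Y^{n+3}|^2$$ $$+\frac{\varepsilon\mu\Theta}2\sum_{i,\alpha=1}^n\Big|\Big(Y^\alpha_i+Y^i_\alpha-\frac2n\sum_{j=1}^nY^j_j\delta_{i\alpha}\Big)+2\Big(u_iY^{n+3}_\alpha+u_\alpha Y^{n+3}_i-\frac2n\sum_{j=1}^nu_jY^{n+3}_j\delta_{i\alpha}\Big)\Big|^2,$$ and this quantity is nonnegative; in particular the matrix $\mathbb X$ is nonnegative.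
   Context: Let $n\ge1$, $\varepsilon>0$, $\Theta>0$, $u\in\mathbb{R}^n$, and let $\mu,\kappa,\nu$ be positive reals (in the paper $\mu=\rho\Theta\langle m^{-1}\rangle_\beta$, $\kappa=\frac{n+2}2\rho\Theta\langle m^{-2}\rangle_\beta$, $\nu=\rho\Theta(\langle m^{-2}\rangle_\beta-\langle m^{-1}\rangle_\beta^2)$, which are positive). With $(e_1,\dots,e_n)$ the canonical basis of $\mathbb{R}^n$, $(a\otimes b)_{ij}=a_ib_j$, $\mathrm 0_n$ the zero matrix, define $n\times n$ blocks $\mathbb X^{\alpha\beta'}$, $\alpha,\beta'\in\{1,\dots,n+3\}$: $\mathbb X^{\alpha\beta'}=\varepsilon\mu\Theta(\mathrm I_n\delta^{\alpha\beta'}+e_{\beta'}\otimes e_\alpha-\frac2ne_\alpha\otimes e_{\beta'})$ for $\alpha,\beta'\le n$; $\mathbb X^{\alpha,n+1}=\mathbb X^{\alpha,n+2}=(\mathbb X^{n+1,\alpha})^T=(\mathbb X^{n+2,\alpha})^T=\mathrm 0_n$ for $\alpha\le n$; $\mathbb X^{\alpha,n+3}=(\mathbb X^{n+3,\alpha})^T=2\varepsilon\mu\Theta(u_\alpha\mathrm I_n+u\otimes e_\alpha-\frac2ne_\alpha\otimes u)$ for $\alpha\le n$; $\mathbb X^{n+1,n+1}=\varepsilon\nu\mathrm I_n$, $\mathbb X^{n+1,n+2}=\mathbb X^{n+2,n+1}=\mathbb X^{n+2,n+2}=\mathrm 0_n$; $\mathbb X^{n+1,n+3}=\mathbb X^{n+3,n+1}=(n+2)\varepsilon\nu\Theta\mathrm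 I_n$, $\mathbb X^{n+2,n+3}=\mathbb X^{n+3,n+2}=\mathrm 0_n$; $\mathbb X^{n+3,n+3}=\varepsilon\Theta[((n+2)^2\nu\Theta+4\kappa\Theta+4\mu|u|^2)\mathrm I_n+4\frac{n-2}n\mu\,u\otimes u]$. *)

(* Defs.v *)
From HB Require Import structures.
From mathcomp Require Import all_boot all_order all_algebra.
Set Implicit Arguments. Unset Strict Implicit. Unset Printing Implicit Defensive.
Import Order.TTheory GRing.Theory Num.Theory.
Local Open Scope ring_scope.

Section Defs.
Variables (R : realFieldType) (n : nat).

(* canonical basis vector e_k of R^n (0-based index k; e_k = 0 if k >= n) *)
Definition ev (k : nat) : 'cV[R]_n := \col_(i < n) ((i : nat) == k)%:R.

Definition tens (a b : 'cV[R]_n) : 'M[R]_n := a *m b^T.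

Definition cmp (v : 'cV[R]_n) (k : nat) : R := ((ev k)^T *m v) 0 0.

Definition sqnorm (v : 'cV[R]_n) : R := \sum_(i < n) v i 0 ^+ 2.

(* The n x n blocks X^{ab}, indices a b : 'I_n.+3 are 0-based:
   paper index alpha in 1..n   <-> a in 0..n-1,
   paper index n+1, n+2, n+3   <-> a = n, n+1, n+2. *)
Definition Xblk (eps mu kappa nu Theta : R) (u : 'cV[R]_n) (a b : 'I_n.+3)
  : 'M[R]_n :=
  let c := 2%:R / n%:R in
  let XU (k : nat) : 'M[R]_n :=
    (2%:R * eps * mu * Theta) *:
      ((cmp u k) *: 1%:M + tens u (ev k) - c *: tens (ev k) u) in
  if (((a : nat) < n)%N && ((b : nat) < n)%N) then
    (eps * mu * Theta) *:
      (((a : nat) == b)%:R *: 1%:M + tens (ev b) (ev a) - c *: tens (ev a) (ev b))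
  else if ((a : nat) < n)%N then
    (if (b : nat) == n.+2 then XU a else 0)
  else if ((b : nat) < n)%N then
    (if (a : nat) == n.+2 then (XU b)^T else 0)
  else if ((a : nat) == n) && ((b : nat) == n) then (eps * nu) *: 1%:M
  else if (((a : nat) == n) && ((b : nat) == n.+2))
          || (((a : nat) == n.+2) && ((b : nat) == n)) then
    ((n%:R + 2%:R) * eps * nu * Theta) *: 1%:M
  else if ((a : nat) == n.+2) && ((b : nat) == n.+2) then
    (eps * Theta) *:
      (((n%:R + 2%:R) ^+ 2 * nu * Theta + 4%:R * kappa * Theta
         + 4%:R * mu * sqnorm u) *: 1%:M
       + (4%:R * (n%:R - 2%:R) / n%:R * mu) *: tens u u)
  else 0.

Definition Xform (eps mu kappa nu Theta : R) (u : 'cV[R]_n)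
  (Y : 'I_n.+3 -> 'cV[R]_n) : R :=
  \sum_(a < n.+3) \sum_(b < n.+3)
     ((Y a)^T *m Xblk eps mu kappa nu Theta u a b *m Y b) 0 0.

End Defs.

(* Main.v *)
Require Import Defs.
From HB Require Import structures.
From mathcomp Require Import all_boot all_order all_algebra.
Import Order.TTheory GRing.Theory Num.Theory.
Local Open Scope ring_scope.
From mathcomp Require Import ring zify.
Set Implicit Arguments. Unset Strict Implicit.
Section Help.
Variables (R : realFieldType) (n : nat).
Implicit Types (v w a b : 'cV[R]_n) (M N : 'M[R]_n).

Definition dot v w := \sum_(i < n) v i 0 * w i 0.
Definition qf v M w := (v^T *m M *m w) 0 0.

Lemma qfD v M N w : qf v (M + N) w = qf v M w + qf v N w.
Proof. by rewrite /qf mulmxDr mulmxDl mxE. Qed.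
Lemma qfB v M N w : qf v (M - N) w = qf v M w - qf v N w.
Proof. by rewrite /qf mulmxBr mulmxBl !mxE. Qed.
Lemma qfZ v (k : R) M w : qf v (k *: M) w = k * qf v M w.
Proof. by rewrite /qf -scalemxAr -scalemxAl mxE. Qed.
Lemma qf0 v w : qf v 0 w = 0.
Proof. by rewrite /qf mulmx0 mul0mx mxE. Qed.
Lemma qf1 v w : qf v 1%:M w = dot v w.
Proof. by rewrite /qf mulmx1 mxE; apply: eq_bigr => i _; rewrite mxE. Qed.
Lemma dot1 v w : ((v^T) *m w) 0 0 = dot v w.
Proof. by rewrite mxE; apply: eq_bigr => i _; rewrite mxE. Qed.
Lemma qf_tens v a b w : qf v (tens a b) w = dot v a * dot b w.
Proof.
rewrite /qf /tens !mulmxA -(mulmxA (v^T *m a)) mxE big_ord1.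
by rewrite -!dot1.
Qed.
Lemma qfT v M w : qf v M^T w = qf w M v.
Proof. by rewrite /qf -(trmxK w) -!trmx_mul mxE trmxK mulmxA. Qed.
Lemma dotC v w : dot v w = dot w v.
Proof. by apply: eq_bigr => i _; rewrite mulrC. Qed.
Lemma dot_ev v (k : 'I_n) : dot v (ev R n k) = v k 0.
Proof.
rewrite /dot (bigD1 k) //= mxE eqxx mulr1 big1 ?addr0 // => i /negbTE ik.
rewrite mxE; case: eqP => [/val_inj E|_]; last by rewrite mulr0.
by rewrite E eqxx in ik.
Qed.
Lemma ev_dot v (k : 'I_n) : dot (ev R n k) v = v k 0.
Proof. by rewrite dotC dot_ev. Qed.
Lemma cmpE v (k : 'I_n) : cmp v k = v k 0.
Proof. by rewrite /cmp dot1 ev_dot. Qed.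
Lemma sqnormE v : sqnorm v = dot v v.
Proof. by apply: eq_bigr => i _; rewrite expr2. Qed.
Lemma sum_delta (i : 'I_n) (F : 'I_n -> R) :
  \sum_(a < n) F a * (i == a)%:R = F i.
Proof.
rewrite (bigD1 i) //= eqxx mulr1 big1 ?addr0 // => a ai.
by rewrite eq_sym (negbTE ai) mulr0.
Qed.
End Help.

Section Help2.
Variables (R : realFieldType) (n : nat).
Lemma sum_delta2 (a : 'I_n) (F : 'I_n -> R) :
  \sum_(b < n) ((a : nat) == b)%:R * F b = F a.
Proof.
rewrite (bigD1 a) //= eqxx mul1r big1 ?addr0 // => b ba.
case: eqP => [/val_inj E|_]; last by rewrite mul0r.
by rewrite E eqxx in ba.
Qed.
Lemma sqnormDZ (v w : 'cV[R]_n) (k : R) :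
  sqnorm (v + k *: w) = dot v v + 2%:R * k * dot v w + k ^+ 2 * dot w w.
Proof.
rewrite /sqnorm /dot !mulr_sumr -!big_split /=; apply: eq_bigr => i _.
rewrite !mxE; ring.
Qed.
Lemma sum_lin3 (I : finType) (F G H : I -> R) k1 k2 k3 :
  \sum_i (k1 * F i + k2 * G i + k3 * H i) = k1 * \sum_i F i + k2 * \sum_i G i + k3 * \sum_i H i.
Proof. by rewrite !big_split /= !mulr_sumr. Qed.
End Help2.

Section Help3.
Variables (R : realFieldType) (n : nat).
Lemma delta2 (i a : 'I_n) : ((i == a)%:R : R) ^+ 2 = (i == a)%:R.
Proof. by case: (i == a); rewrite ?expr1n ?expr0n. Qed.

Lemma sum_delta1 (i : 'I_n) : \sum_(a < n) ((i == a)%:R : R) = 1.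
Proof. by rewrite (eq_bigr (fun a => 1 * (i == a)%:R)) ?(sum_delta i (fun _ => 1)) // => a _; rewrite mul1r. Qed.

Lemma sq_sym (A : 'I_n -> 'I_n -> R) (h : R) :
  \sum_(i < n) \sum_(a < n) ((A i a + A a i) - h * (i == a)%:R) ^+ 2
  = 2%:R * (\sum_(i < n) \sum_(a < n) A i a ^+ 2)
    + 2%:R * (\sum_(i < n) \sum_(a < n) A i a * A a i)
    - 2%:R * h * (2%:R * \sum_(i < n) A i i) + h ^+ 2 * n%:R.
Proof.
have E : forall i : 'I_n, \sum_(a < n) ((A i a + A a i) - h * (i == a)%:R) ^+ 2
   = \sum_(a < n) A i a ^+ 2 + \sum_(a < n) A a i ^+ 2 + 2%:R * \sum_(a < n) A i a * A a i
     - 2%:R * h * (2%:R * A i i) + h ^+ 2.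
  move=> i.
  rewrite (eq_bigr (fun a => A i a ^+ 2 + A a i ^+ 2 + 2%:R * (A i a * A a i)
     + (- (2%:R * h)) * ((A i a + A a i) * (i == a)%:R) + h ^+ 2 * (1 * (i == a)%:R))); last first.
    by move=> a _; case: (i == a) => /=; ring.
  rewrite !big_split /= -!mulr_sumr sum_delta ?mul1r sum_delta1; ring.
rewrite (eq_bigr _ (fun i _ => E i)) /=.
rewrite !big_split /= sumrN -!mulr_sumr sumr_const card_ord.
rewrite [\sum_(i < n) \sum_(a < n) A a i ^+ 2]exchange_big /= -mulr_natr; ring.
Qed.
End Help3.

Section Help4.
Variables (R : realFieldType) (n : nat).
Lemma sum2_lin (F G H K : 'I_n -> 'I_n -> R) k2 k3 k4 :
  \sum_(i < n) \sum_(a < n) (F i a + k2 * G i a + k3 * H i a + k4 * K i a)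
  = \sum_(i < n) \sum_(a < n) F i a + k2 * \sum_(i < n) \sum_(a < n) G i a
    + k3 * \sum_(i < n) \sum_(a < n) H i a + k4 * \sum_(i < n) \sum_(a < n) K i a.
Proof.
rewrite (eq_bigr (fun i => \sum_(a < n) F i a + k2 * \sum_(a < n) G i a
   + k3 * \sum_(a < n) H i a + k4 * \sum_(a < n) K i a)) => [|i _].
  by rewrite !big_split /= -!mulr_sumr.
by rewrite !big_split /= -!mulr_sumr.
Qed.
End Help4.

Section Main.
Variables (R : realFieldType) (n : nat) (eps Theta mu kappa nu : R) (u : 'cV[R]_n).
Local Notation X := (Xblk eps mu kappa nu Theta u).
Local Notation c := (2%:R / n%:R : R).
Local Notation XU k := ((2%:R * eps * mu * Theta) *:
      ((cmp u k) *: 1%:M + tens u (ev R n k) - c *: tens (ev R n k) u)).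

Lemma split3 (F : 'I_n.+3 -> R) :
  \sum_(a < n.+3) F a = \sum_(a < n) F (inord a) + F (inord n) + F (inord n.+1) + F (inord n.+2).
Proof.
rewrite (eq_bigr (fun a : 'I_n.+3 => F (inord a))); last by move=> a _; rewrite inord_val.
by rewrite !big_ord_recr.
Qed.

Lemma ltn3 (a : 'I_n) : (a < n.+3)%N.
Proof. by apply: leq_trans (ltn_ord a) _; rewrite ltnW // ltnW. Qed.

Lemma f1 : ((n == n.+2) = false) * ((n.+2 == n) = false) * ((n.+1 == n) = false)
  * ((n.+1 == n.+2) = false) * ((n.+1 < n)%N = false) * ((n.+2 < n)%N = false) * ((n.+2 == n.+1) = false) * ((n == n.+1) = false).
Proof. by repeat split; lia. Qed.

Lemma f2 : ((n < n.+3)%N * (n.+1 < n.+3)%N * (n.+2 < n.+3)%N)%type.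
Proof. by repeat split; lia. Qed.

Ltac xs := rewrite /Xblk ?inordK ?ltn3 ?f2 //= ?ltn_ord ?ltnn ?eqxx ?f1 //=.

Lemma X_ab (a b : 'I_n) : X (inord a) (inord b) = (eps * mu * Theta) *:
      (((a : nat) == b)%:R *: 1%:M + tens (ev R n b) (ev R n a) - c *: tens (ev R n a) (ev R n b)).
Proof. by xs. Qed.

Lemma X_an (a : 'I_n) : X (inord a) (inord n) = 0. Proof. by xs. Qed.
Lemma X_an1 (a : 'I_n) : X (inord a) (inord n.+1) = 0. Proof. by xs. Qed.
Lemma X_an2 (a : 'I_n) : X (inord a) (inord n.+2) = XU a. Proof. by xs. Qed.
Lemma X_nb (a : 'I_n) : X (inord n) (inord a) = 0. Proof. by xs. Qed.
Lemma X_n1b (a : 'I_n) : X (inord n.+1) (inord a) = 0. Proof. by xs. Qed.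
Lemma X_n2b (a : 'I_n) : X (inord n.+2) (inord a) = (XU a)^T. Proof. by xs. Qed.
Lemma X_nn : X (inord n) (inord n) = (eps * nu) *: 1%:M. Proof. by xs. Qed.
Lemma X_nn1 : X (inord n) (inord n.+1) = 0. Proof. by xs. Qed.
Lemma X_nn2 : X (inord n) (inord n.+2) = ((n%:R + 2%:R) * eps * nu * Theta) *: 1%:M. Proof. by xs. Qed.
Lemma X_n1n : X (inord n.+1) (inord n) = 0. Proof. by xs. Qed.
Lemma X_n1n1 : X (inord n.+1) (inord n.+1) = 0. Proof. by xs. Qed.
Lemma X_n1n2 : X (inord n.+1) (inord n.+2) = 0. Proof. by xs. Qed.
Lemma X_n2n : X (inord n.+2) (inord n) = ((n%:R + 2%:R) * eps * nu * Theta) *: 1%:M. Proof. by xs. Qed.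
Lemma X_n2n1 : X (inord n.+2) (inord n.+1) = 0. Proof. by xs. Qed.
Lemma X_n2n2 : X (inord n.+2) (inord n.+2) = (eps * Theta) *:
      (((n%:R + 2%:R) ^+ 2 * nu * Theta + 4%:R * kappa * Theta
         + 4%:R * mu * sqnorm u) *: 1%:M
       + (4%:R * (n%:R - 2%:R) / n%:R * mu) *: tens u u). Proof. by xs. Qed.

Variable Y : 'I_n.+3 -> 'cV[R]_n.
Local Notation y a := (Y (inord a)).
Local Notation Z := (Y (inord n.+2)).
Definition P1 := \sum_(a < n) dot (y a) (y a).
Definition P2 := \sum_(a < n) \sum_(b < n) y a b 0 * y b a 0.
Definition tr := \sum_(j < n) y j j 0.
Definition Q1 := \sum_(a < n) u a 0 * dot (y a) Z.
Definition Q2 := \sum_(a < n) dot (y a) u * Z a 0.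

Lemma hAB : \sum_(a < n) \sum_(b < n) qf (y a) (X (inord a) (inord b)) (y b)
  = eps * mu * Theta * (P1 + P2 - c * (tr * tr)).
Proof.
rewrite (eq_bigr (fun a : 'I_n => eps * mu * Theta * (dot (y a) (y a) + \sum_(b < n) y a b 0 * y b a 0 - c * (y a a 0 * tr)))).
  by rewrite [X in X * tr]/tr mulr_suml [c * _]mulr_sumr /P1 /P2 -big_split -sumrB mulr_sumr.
move=> a _.
rewrite (eq_bigr (fun b : 'I_n => eps * mu * Theta * (((a:nat) == b)%:R * dot (y a) (y b) + y a b 0 * y b a 0 - c * (y a a 0 * y b b 0)))).
  by rewrite -(sum_delta2 a (fun b => dot (y a) (y b))) /tr mulr_sumr [c * _]mulr_sumr -big_split -sumrB mulr_sumr.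
move=> b _; rewrite X_ab qfZ qfB qfD qfZ qf1 qfZ !qf_tens !dot_ev !ev_dot; ring.
Qed.

Local Notation A i a := (y a i 0 + 2%:R * (u i 0 * Z a 0)).

Lemma hAA : \sum_(i < n) \sum_(a < n) (A i a) ^+ 2
  = P1 + 4%:R * Q2 + 4%:R * (dot u u * dot Z Z).
Proof.
rewrite (eq_bigr (fun i => \sum_(a < n) (y a i 0 * y a i 0 + 4%:R * ((y a i 0 * u i 0) * Z a 0)
   + 4%:R * ((u i 0 * u i 0) * (Z a 0 * Z a 0)) + 0 * 0))); last first.
  by move=> i _; apply: eq_bigr => a _; ring.
rewrite sum2_lin mul0r addr0; congr (_ + _ * _ + _ * _).
- by rewrite exchange_big.
- rewrite exchange_big; apply: eq_bigr => a _; by rewrite /dot mulr_suml.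
- rewrite /dot mulr_suml; apply: eq_bigr => i _; by rewrite mulr_sumr.
Qed.

Lemma hAAT : \sum_(i < n) \sum_(a < n) (A i a * A a i)
  = P2 + 4%:R * Q1 + 4%:R * (dot u Z * dot u Z).
Proof.
rewrite (eq_bigr (fun i => \sum_(a < n) (y a i 0 * y i a 0 + 2%:R * (u a 0 * (y a i 0 * Z i 0))
   + 2%:R * (u i 0 * (y i a 0 * Z a 0)) + 4%:R * ((u i 0 * Z i 0) * (u a 0 * Z a 0))))); last first.
  by move=> i _; apply: eq_bigr => a _; ring.
rewrite sum2_lin.
have e1 : \sum_(i < n) \sum_(a < n) u a 0 * (y a i 0 * Z i 0) = Q1.
  rewrite exchange_big; apply: eq_bigr => a _; by rewrite /dot mulr_sumr.
have e2 : \sum_(i < n) \sum_(a < n) u i 0 * (y i a 0 * Z a 0) = Q1.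
  apply: eq_bigr => a _; by rewrite /dot mulr_sumr.
have e3 : \sum_(i < n) \sum_(a < n) (u i 0 * Z i 0) * (u a 0 * Z a 0) = dot u Z * dot u Z.
  rewrite /dot mulr_suml; apply: eq_bigr => i _; by rewrite mulr_sumr.
rewrite e1 e2 e3 exchange_big /=; rewrite /P2; ring.
Qed.

Lemma hAd : \sum_(i < n) A i i = tr + 2%:R * dot u Z.
Proof. by rewrite big_split /= -mulr_sumr. Qed.

Lemma hR (hn : n%:R != 0 :> R) :
      \sum_(i < n) \sum_(a < n)
        ( (Y (inord a) i 0 + Y (inord i) a 0
           - 2%:R / n%:R * (\sum_(j < n) Y (inord j) j 0) * (i == a)%:R)
          + 2%:R * (u i 0 * Z a 0 + u a 0 * Z i 0
           - 2%:R / n%:R * (\sum_(j < n) u j 0 * Z j 0) * (i == a)%:R) ) ^+ 2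
  = 2%:R * (P1 + 4%:R * Q2 + 4%:R * (dot u u * dot Z Z))
    + 2%:R * (P2 + 4%:R * Q1 + 4%:R * (dot u Z * dot u Z))
    - 2%:R * (c * (tr + 2%:R * dot u Z)) * (2%:R * (tr + 2%:R * dot u Z))
    + (c * (tr + 2%:R * dot u Z)) ^+ 2 * n%:R.
Proof.
have := sq_sym (fun i a => A i a) (c * (tr + 2%:R * dot u Z)).
rewrite /= hAA hAAT hAd => <-.
apply: eq_bigr => i _; apply: eq_bigr => a _.
rewrite -/tr -/(dot u Z); congr (_ ^+ 2); ring.
Qed.

Lemma hA2 : \sum_(a < n) qf (y a) (X (inord a) (inord n.+2)) Z
  = 2%:R * eps * mu * Theta * (Q1 + Q2 - c * (tr * dot u Z)).
Proof.
rewrite (eq_bigr (fun a : 'I_n => 2%:R * eps * mu * Theta * (u a 0 * dot (y a) Z + dot (y a) u * Z a 0 - c * (y a a 0 * dot u Z)))).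
  by rewrite /tr mulr_suml [c * _]mulr_sumr /Q1 /Q2 -big_split -sumrB mulr_sumr.
move=> a _; rewrite X_an2 qfZ qfB qfD qfZ qf1 qfZ !qf_tens cmpE dot_ev ev_dot; ring.
Qed.

Lemma hB2 : \sum_(a < n) qf Z (X (inord n.+2) (inord a)) (y a)
  = 2%:R * eps * mu * Theta * (Q1 + Q2 - c * (tr * dot u Z)).
Proof. by rewrite -hA2; apply: eq_bigr => b _; rewrite X_n2b qfT X_an2. Qed.

Lemma hL : Xform eps mu kappa nu Theta u Y =
  eps * mu * Theta * (P1 + P2 - c * (tr * tr))
  + 2%:R * (2%:R * eps * mu * Theta * (Q1 + Q2 - c * (tr * dot u Z)))
  + eps * nu * dot (y n) (y n)
  + 2%:R * ((n%:R + 2%:R) * eps * nu * Theta * dot (y n) Z)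
  + eps * Theta * ((((n%:R + 2%:R) ^+ 2 * nu * Theta + 4%:R * kappa * Theta
         + 4%:R * mu * dot u u) * dot Z Z)
       + (4%:R * (n%:R - 2%:R) / n%:R * mu) * (dot Z u * dot u Z)).
Proof.
have -> : Xform eps mu kappa nu Theta u Y
   = \sum_(a < n.+3) \sum_(b < n.+3) qf (Y a) (X a b) (Y b) by [].
rewrite split3; under eq_bigr => a _ do rewrite split3.
rewrite !split3 !big_split /= hAB hA2 hB2.
have z1 : \sum_(i < n) qf (y i) (X (inord i) (inord n)) (y n) = 0.
  by apply: big1 => a _; rewrite X_an qf0.
have z2 : \sum_(i < n) qf (y i) (X (inord i) (inord n.+1)) (y n.+1) = 0.
  by apply: big1 => a _; rewrite X_an1 qf0.
have z3 : \sum_(i < n) qf (y n) (X (inord n) (inord i)) (y i) = 0.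
  by apply: big1 => a _; rewrite X_nb qf0.
have z4 : \sum_(i < n) qf (y n.+1) (X (inord n.+1) (inord i)) (y i) = 0.
  by apply: big1 => a _; rewrite X_n1b qf0.
rewrite z1 z2 z3 z4 X_nn X_nn1 X_nn2 X_n1n X_n1n1 X_n1n2 X_n2n X_n2n1 X_n2n2 !qf0.
rewrite !qfZ !qfD !qfZ !qf1 !qf_tens sqnormE [dot Z (y n)]dotC; ring.
Qed.
End Main.

(* Y (inord k) is Y^{k+1} in the paper's 1-based numbering. *)
Theorem lemma4p7 (R : realFieldType) (n : nat) (eps Theta mu kappa nu : R)
  (u : 'cV[R]_n) (Y : 'I_n.+3 -> 'cV[R]_n) :
  (0 < n)%N -> 0 < eps -> 0 < Theta -> 0 < mu -> 0 < kappa -> 0 < nu ->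
  let Yn1 := Y (inord n) in
  let Yn3 := Y (inord n.+2) in
  Xform eps mu kappa nu Theta u Y =
    eps * nu * sqnorm (Yn1 + ((n%:R + 2%:R) * Theta) *: Yn3)
    + 4%:R * eps * kappa * Theta ^+ 2 * sqnorm Yn3
    + (eps * mu * Theta / 2%:R) *
      \sum_(i < n) \sum_(a < n)
        ( (Y (inord a) i 0 + Y (inord i) a 0
           - 2%:R / n%:R * (\sum_(j < n) Y (inord j) j 0) * (i == a)%:R)
          + 2%:R * (u i 0 * Yn3 a 0 + u a 0 * Yn3 i 0
           - 2%:R / n%:R * (\sum_(j < n) u j 0 * Yn3 j 0) * (i == a)%:R) ) ^+ 2
  /\ 0 <= Xform eps mu kappa nu Theta u Y.
Proof.
move=> hn he hT hm hk hnu; cbv zeta.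
have nz : n%:R != 0 :> R by rewrite pnatr_eq0 -lt0n.
have key : Xform eps mu kappa nu Theta u Y =
    eps * nu * sqnorm (Y (inord n) + ((n%:R + 2%:R) * Theta) *: Y (inord n.+2))
    + 4%:R * eps * kappa * Theta ^+ 2 * sqnorm (Y (inord n.+2))
    + (eps * mu * Theta / 2%:R) *
      \sum_(i < n) \sum_(a < n)
        ( (Y (inord a) i 0 + Y (inord i) a 0
           - 2%:R / n%:R * (\sum_(j < n) Y (inord j) j 0) * (i == a)%:R)
          + 2%:R * (u i 0 * Y (inord n.+2) a 0 + u a 0 * Y (inord n.+2) i 0
           - 2%:R / n%:R * (\sum_(j < n) u j 0 * Y (inord n.+2) j 0) * (i == a)%:R) ) ^+ 2.
  rewrite hL hR // sqnormDZ sqnormE [dot (Y (inord n.+2)) u]dotC.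
  by field.
split => //.
have sq0 : forall v : 'cV[R]_n, 0 <= sqnorm v.
  by move=> v; apply: sumr_ge0 => i _; apply: sqr_ge0.
rewrite key; apply: addr_ge0; [apply: addr_ge0|].
- by apply: mulr_ge0 => //; apply: mulr_ge0; apply: ltW.
- apply: mulr_ge0 => //; apply: mulr_ge0; last by apply: exprn_ge0; apply: ltW.
  by apply: mulr_ge0; [apply: mulr_ge0 => //|]; apply: ltW.
- apply: mulr_ge0; last by apply: sumr_ge0 => i _; apply: sumr_ge0 => a _; apply: sqr_ge0.
  by apply: divr_ge0 => //; apply: mulr_ge0; [apply: mulr_ge0|]; apply: ltW.
Qed.
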